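(* Let $\langle X,d\rangle$ be a metric space. The following are equivalent: (1) $X$ is cofinally Bourbaki quasi-complete; (2) whenever $f:X\to\mathbb{R}$ is a continuous, nowhere-zero function that maps every cofinally Bourbaki quasi-Cauchy sequence in $X$ to a cofinally Bourbaki-Cauchy sequence in $\mathbb{R}$, the reciprocal $1/f$ is also continuous and maps every cofinally Bourbaki quasi-Cauchy sequence in $X$ to a cofinally Bourbaki-Cauchy sequence in $\mathbb{R}$.
   Context: For $\varepsilon>0$, an $\varepsilon$-chain joining $x,y$ is a finite sequence $x=x_0,\dots,x_n=y$ with $d(x_{i-1},x_i)<\varepsilon$. A sequence $\langle x_n\rangle$ in $X$ is cofinally Bourbaki quasi-Cauchy if for every $\varepsilon>0$ there is an infinite $N_\varepsilon\subseteq\mathbb{N}$ such that any $x_j,x_k$ with $j,k\in N_\varepsilon$ can be joined by an $\varepsilon$-chain; $X$ is cofinally Bourbaki quasi-complete if every such sequence has a cluster point. In a metric space $\langle Y,\rho\rangle$, let $S^1_\rho(p,\varepsilon)$ be the open ball of radius $\varepsilon$ about $p$ and $S^{m}_\rho(p,\varepsilon)=\{y: \rho(y,S^{m-1}_\rho(p,\varepsilon))<\varepsilon\}$. A sequence $\langle y_n\rangle$ in $Y$ is cofinally Bourbaki-Cauchy if for every $\varepsilon>0$ there exist an infinite $N_\varepsilon\subseteq\mathbb{N}$, $m\in\mathbb{N}$ and $p\in Y$ with $y_n\in S^m_\rho(p,\varepsilon)$ for all $n\in N_\varepsilon$. *)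

(* Defs.v *)
From Stdlib Require Import Reals Lra.
Open Scope R_scope.

Record is_metric {X : Type} (d : X -> X -> R) : Prop := {
  metric_nonneg : forall x y, 0 <= d x y;
  metric_zero : forall x y, d x y = 0 <-> x = y;
  metric_sym : forall x y, d x y = d y x;
  metric_triangle : forall x y z, d x z <= d x y + d y z
}.

Definition infinite_nat (N : nat -> Prop) : Prop :=
  forall m, exists n, (m <= n)%nat /\ N n.

Definition eps_chain {X : Type} (d : X -> X -> R) (eps : R) (x y : X) : Prop :=
  exists (n : nat) (s : nat -> X),
    s 0%nat = x /\ s n = y /\
    forall i, (i < n)%nat -> d (s i) (s (S i)) < eps.

Definition cofinally_Bourbaki_quasi_Cauchy {X : Type} (d : X -> X -> R)
    (x : nat -> X) : Prop :=
  forall eps, 0 < eps ->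
    exists N : nat -> Prop, infinite_nat N /\
      forall j k, N j -> N k -> eps_chain d eps (x j) (x k).

Definition cluster_point {X : Type} (d : X -> X -> R) (x : nat -> X) (p : X) : Prop :=
  forall eps, 0 < eps -> forall m, exists n, (m <= n)%nat /\ d (x n) p < eps.

Definition cofinally_Bourbaki_quasi_complete {X : Type} (d : X -> X -> R) : Prop :=
  forall x : nat -> X, cofinally_Bourbaki_quasi_Cauchy d x ->
    exists p, cluster_point d x p.

(* Iterated enlargements: S_iter rho p eps m  is  S^{m+1}_rho(p,eps).
   S^1 = open ball; S^{m+1} = { y | rho(y, S^m) < eps }, and
   rho(y,A) = inf_{a in A} rho(y,a) < eps  iff  exists a in A, rho(y,a) < eps. *)
Fixpoint S_iter {Y : Type} (rho : Y -> Y -> R) (p : Y) (eps : R) (m : nat) : Y -> Prop :=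
  match m with
  | 0%nat => fun y => rho p y < eps
  | S m' => fun y => exists z, S_iter rho p eps m' z /\ rho y z < eps
  end.

Definition cofinally_Bourbaki_Cauchy {Y : Type} (rho : Y -> Y -> R) (y : nat -> Y) : Prop :=
  forall eps, 0 < eps ->
    exists (N : nat -> Prop) (m : nat) (p : Y), infinite_nat N /\
      forall n, N n -> S_iter rho p eps m (y n).

Definition R_dist (a b : R) : R := Rabs (a - b).

Definition metric_continuous {X : Type} (d : X -> X -> R) (f : X -> R) : Prop :=
  forall x eps, 0 < eps -> exists delta, 0 < delta /\
    forall y, d x y < delta -> Rabs (f y - f x) < eps.

Definition preserves_cBqC_to_cBC {X : Type} (d : X -> X -> R) (f : X -> R) : Prop :=
  forall x : nat -> X, cofinally_Bourbaki_quasi_Cauchy d x ->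
    cofinally_Bourbaki_Cauchy R_dist (fun n => f (x n)).

(* Main.v *)
Require Import Defs.
From Stdlib Require Import Reals Lra Lia Classical Arith.
Open Scope R_scope.

Lemma S_iter_back (p eps : R) (m : nat) (y : R) :
  S_iter R_dist p eps m y -> Rabs (p - y) < (INR m + 1) * eps.
Proof.
  revert y; induction m as [|m IH]; intros y H; simpl in H.
  - unfold R_dist in H. simpl. lra.
  - destruct H as [z [Hz Hyz]]. apply IH in Hz. unfold R_dist in Hyz.
    rewrite S_INR.
    pose proof (Rabs_triang (p - z) (z - y)).
    replace (p - z + (z - y)) with (p - y) in H by ring.
    rewrite Rabs_minus_sym in Hyz. lra.
Qed.

Lemma S_iter_fwd (p eps : R) (m : nat) (y : R) : 0 < eps ->
  Rabs (p - y) < (INR m + 1) * eps -> S_iter R_dist p eps m y.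
Proof.
  intro He. revert y; induction m as [|m IH]; intros y H; simpl.
  - unfold R_dist. simpl in H. lra.
  - rewrite S_INR in H. set (k := INR m + 1) in *.
    assert (Hk : 0 < k) by (unfold k; pose proof (pos_INR m); lra).
    set (t := (y - p) / (k + 1)).
    assert (Ey : y = p + t * (k + 1)) by (unfold t; field; lra).
    assert (Ht : Rabs t < eps).
    { rewrite Ey in H. replace (p - (p + t * (k + 1))) with (- (t * (k+1))) in H by ring.
      rewrite Rabs_Ropp, Rabs_mult, (Rabs_pos_eq (k+1)) in H by lra.
      destruct (Rlt_or_le (Rabs t) eps) as [h|h]; auto.
      assert (eps * (k+1) <= Rabs t * (k+1)) by (apply Rmult_le_compat_r; lra). lra. }
    exists (p + t * k). split.
    + apply IH. replace (p - (p + t * k)) with (- (t * k)) by ring.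
      rewrite Rabs_Ropp, Rabs_mult, (Rabs_pos_eq k) by lra.
      fold k. rewrite (Rmult_comm k eps). apply Rmult_lt_compat_r; lra.
    + unfold R_dist. rewrite Ey. replace (p + t * (k + 1) - (p + t * k)) with t by ring. exact Ht.
Qed.

Lemma cBC_of_bounded (y : nat -> R) (N : nat -> Prop) (B : R) :
  infinite_nat N -> (forall n, N n -> Rabs (y n) <= B) ->
  cofinally_Bourbaki_Cauchy R_dist y.
Proof.
  intros HN HB eps He.
  destruct (INR_archimed eps B He) as [m Hm].
  exists N, m, 0. split; auto. intros n Hn. apply S_iter_fwd; auto.
  rewrite Rminus_0_l, Rabs_Ropp. specialize (HB n Hn). nra.
Qed.

Lemma inv_close (a b e : R) : a <> 0 -> 0 < e ->
  Rabs (b - a) < Rmin (Rabs a / 2) (e * (Rabs a * Rabs a) / 2) ->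
  Rabs (/ b - / a) < e.
Proof.
  intros Ha He H.
  pose proof (Rmin_l (Rabs a / 2) (e * (Rabs a * Rabs a) / 2)).
  pose proof (Rmin_r (Rabs a / 2) (e * (Rabs a * Rabs a) / 2)).
  assert (HA : 0 < Rabs a) by (apply Rabs_pos_lt; auto).
  pose proof (Rabs_triang_inv a (a - b)).
  replace (a - (a - b)) with b in H2 by ring.
  rewrite Rabs_minus_sym in H.
  assert (HB : Rabs a / 2 < Rabs b) by lra.
  assert (Hb : b <> 0) by (intro; subst; rewrite Rabs_R0 in HB; lra).
  replace (/ b - / a) with ((a - b) * / (a * b)) by (field; auto).
  rewrite Rabs_mult, Rabs_inv, Rabs_mult.
  assert (HAB : 0 < Rabs a * Rabs b) by nra.
  apply (Rmult_lt_reg_r (Rabs a * Rabs b)); auto.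
  rewrite Rmult_assoc, Rinv_l by lra. rewrite Rmult_1_r.
  assert (e * (Rabs a * (Rabs a / 2)) < e * (Rabs a * Rabs b)) by (apply Rmult_lt_compat_l; [lra|apply Rmult_lt_compat_l; lra]). lra.
Qed.

Lemma inv_cont (X : Type) (d : X -> X -> R) (f : X -> R) :
  metric_continuous d f -> (forall x, f x <> 0) ->
  metric_continuous d (fun x => / f x).
Proof.
  intros Hc Hnz x e He.
  assert (HA : 0 < Rabs (f x)) by (apply Rabs_pos_lt; auto).
  destruct (Hc x (Rmin (Rabs (f x) / 2) (e * (Rabs (f x) * Rabs (f x)) / 2))) as [dl [Hdl H]].
  { apply Rmin_glb_lt; [lra|]. assert (0 < Rabs (f x) * Rabs (f x)) by (apply Rmult_lt_0_compat; lra). assert (0 < e * (Rabs (f x) * Rabs (f x))) by (apply Rmult_lt_0_compat; lra). lra. }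
  exists dl; split; auto. intros y Hy. apply inv_close; auto.
Qed.

Theorem mainTheorem6 (X : Type) (d : X -> X -> R) (Hd : is_metric d) :
  cofinally_Bourbaki_quasi_complete d <->
  (forall f : X -> R,
     metric_continuous d f ->
     (forall x, f x <> 0) ->
     preserves_cBqC_to_cBC d f ->
     metric_continuous d (fun x => / f x) /\
     preserves_cBqC_to_cBC d (fun x => / f x)).
Proof.
  split.
  - intros Hq f Hc Hnz _. split; [apply inv_cont; auto|].
    intros z Hz. destruct (Hq z Hz) as [p Hp].
    assert (HA : 0 < Rabs (f p)) by (apply Rabs_pos_lt; auto).
    destruct (Hc p (Rabs (f p) / 2)) as [dl [Hdl H]]; [lra|].
    apply (cBC_of_bounded _ (fun n => d (z n) p < dl) (2 / Rabs (f p))).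
    + intros m. destruct (Hp dl Hdl m) as [n [Hmn Hn]]. eauto.
    + intros n Hn. rewrite (metric_sym d Hd) in Hn. specialize (H _ Hn).
      pose proof (Rabs_triang_inv (f p) (f p - f (z n))).
      replace (f p - (f p - f (z n))) with (f (z n)) in H0 by ring.
      rewrite Rabs_minus_sym in H. 
      assert (Hb : Rabs (f p) / 2 < Rabs (f (z n))) by lra.
      rewrite Rabs_inv.
      apply (Rmult_le_reg_r (Rabs (f (z n)))); [lra|].
      rewrite Rinv_l by lra. unfold Rdiv.
      apply (Rmult_le_reg_r (Rabs (f p))); [lra|].
      replace (2 * / Rabs (f p) * Rabs (f (z n)) * Rabs (f p)) with (2 * Rabs (f (z n)))
        by (field; lra). lra.
  - intros H2 x Hx. apply NNPP; intro Hno.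
    assert (Hnc : forall p, ~ cluster_point d x p) by (intros p Hp; apply Hno; eauto).
    pose proof (metric_nonneg d Hd) as Dnn.
    pose proof (metric_sym d Hd) as Dsym.
    pose proof (metric_triangle d Hd) as Dtri.
    pose proof (metric_zero d Hd) as Dz.
    assert (Hinv : forall n : nat, 0 < / (INR n + 1)).
    { intro n. apply Rinv_0_lt_compat. pose proof (pos_INR n). lra. }
    pose (E := fun y t => t = -1 \/ exists n, t = -(d y (x n) + / (INR n + 1))).
    assert (Hb : forall y, bound (E y)).
    { intro y. exists 0. intros t [Ht|[n Ht]]; subst; [lra|].
      specialize (Dnn y (x n)). specialize (Hinv n). lra. }
    assert (He : forall y, exists t, E y t) by (intro y; exists (-1); left; auto).
    pose (F := fun y => proj1_sig (completeness (E y) (Hb y) (He y))).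
    assert (HF : forall y, is_lub (E y) (F y)) by (intro y; exact (proj2_sig _)).
    assert (HF1 : forall y, -1 <= F y) by (intro y; apply (proj1 (HF y)); left; auto).
    assert (HF2 : forall y n, -(d y (x n) + / (INR n + 1)) <= F y)
      by (intros y n; apply (proj1 (HF y)); right; eauto).
    assert (HF3 : forall y z, F z <= F y + d y z).
    { intros y z. apply (proj2 (HF z)). intros t [Ht|[n Ht]]; subst.
      - specialize (HF1 y). specialize (Dnn y z). lra.
      - specialize (HF2 y n). specialize (Dtri y z (x n)). lra. }
    assert (HF4 : forall y, F y < 0).
    { intro y. destruct (Rlt_or_le (F y) 0) as [h|h]; auto. exfalso.
      apply (Hnc y). intros eps Heps m. apply NNPP; intro Hnot.
      assert (Hfar : forall n, (m <= n)%nat -> eps <= d (x n) y).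
      { intros n Hn. destruct (Rlt_or_le (d (x n) y) eps) as [h'|h']; auto.
        exfalso; apply Hnot; eauto. }
      pose (c := Rmin 1 (Rmin eps (/ (INR m + 1)))).
      assert (Hc1 : c <= 1) by apply Rmin_l.
      assert (Hc2 : c <= eps) by (eapply Rle_trans; [apply Rmin_r|apply Rmin_l]).
      assert (Hc3 : c <= / (INR m + 1)) by (eapply Rle_trans; [apply Rmin_r|apply Rmin_r]).
      assert (Hc0 : 0 < c).
      { unfold c. apply Rmin_glb_lt; [lra|]. apply Rmin_glb_lt; auto. }
      assert (F y <= - c).
      { apply (proj2 (HF y)). intros t [Ht|[n Ht]]; subst; [lra|].
        destruct (le_lt_dec m n) as [Hmn|Hmn].
        - specialize (Hfar n Hmn). rewrite Dsym in Hfar. specialize (Hinv n). lra.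
        - assert (/ (INR m + 1) <= / (INR n + 1)).
          { apply Rinv_le_contravar. pose proof (pos_INR n); lra.
            apply Rplus_le_compat_r, le_INR. lia. }
          specialize (Dnn y (x n)). lra. }
      lra. }
    pose (f := fun y => - F y).
    assert (Hfc : metric_continuous d f).
    { intros y eps Heps. exists eps. split; auto. intros z Hz. unfold f; cbv beta.
      apply Rabs_def1.
      - specialize (HF3 z y). rewrite Dsym in HF3. lra.
      - specialize (HF3 y z). lra. }
    assert (Hfnz : forall y, f y <> 0) by (intro y; unfold f; specialize (HF4 y); lra).
    assert (Hfp : preserves_cBqC_to_cBC d f).
    { intros z _. apply (cBC_of_bounded _ (fun _ => True) 1).
      - intro m; exists m; split; auto.
      - intros n _. unfold f. specialize (HF4 (z n)). specialize (HF1 (z n)).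
        cbv beta. rewrite Rabs_pos_eq by lra. lra. }
    destruct (H2 f Hfc Hfnz Hfp) as [_ Hp].
    destruct (Hp x Hx 1 ltac:(lra)) as [N [m [p [HN HS]]]].
    destruct (INR_unbounded (Rabs p + INR m + 1)) as [k Hk].
    destruct (HN k) as [n [Hkn Hn]].
    specialize (HS n Hn). apply S_iter_back in HS.
    assert (Hkn' : INR k <= INR n) by (apply le_INR; auto).
    assert (Hf1 : f (x n) <= / (INR n + 1)).
    { unfold f. specialize (HF2 (x n) n). rewrite (proj2 (Dz (x n) (x n)) eq_refl) in HF2. lra. }
    assert (Hf0 : 0 < f (x n)) by (unfold f; specialize (HF4 (x n)); lra).
    assert (Hge : INR n + 1 <= / f (x n)).
    { rewrite <- (Rinv_inv (INR n + 1)). apply Rinv_le_contravar; auto. }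
    pose proof (Rle_abs p).
    pose proof (Rle_abs (/ f (x n) - p)). rewrite Rabs_minus_sym in HS.
    lra.
Qed.
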